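(* For all real numbers $a,b,c,d>0$, \[ \frac{a}{(a^3+63bcd)^{1/3}} + \frac{b}{(63acd+b^3)^{1/3}} + \frac{c}{(63abd+c^3)^{1/3}} + \frac{d}{(63abc+d^3)^{1/3}} \geq 1. \] *)

(* Defs.v *)
From Stdlib Require Import Reals.
Open Scope R_scope.

(* Main.v *)
Require Import Defs.
From Stdlib Require Import Reals Lra Psatz.
Open Scope R_scope.
Lemma p1 q : 0 <= q -> 63 * q^5 <= 9*q^14+27*q^7+27.
Proof. intros. 
assert (h1 := pow2_ge_0 (q-1)). assert (h2:= pow2_ge_0 (q^2-1)). assert (h3:=pow2_ge_0 (q^7-1)).
assert (h4:=pow2_ge_0 (q^3-1)). assert (h5 := pow2_ge_0 (q^5-1)).
nra. Qed.

Lemma amgm3 u v w : 0 <= u -> 0 <= v -> 0 <= w -> 3*(u*v*w) <= u^3+v^3+w^3.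
Proof. intros. assert (h1 := pow2_ge_0 (u-v)). assert (h2 := pow2_ge_0 (v-w)).
assert (h3 := pow2_ge_0 (u-w)).
assert (E: 2*(u^3+v^3+w^3 - 3*(u*v*w)) = (u+v+w)*((u-v)^2+(v-w)^2+(u-w)^2)) by ring.
assert (0 <= (u+v+w)*((u-v)^2+(v-w)^2+(u-w)^2)) by (apply Rmult_le_pos; lra). lra. Qed.

Lemma key x y z w : 0 < x -> 0 < y -> 0 < z -> 0 < w ->
  x^63 + 63 * x^15 * (y^16*z^16*w^16) <= (x^21+y^21+z^21+w^21)^3.
Proof. intros hx hy hz hw.
set (m := y*z*w). assert (hm : 0 < m) by (unfold m; repeat apply Rmult_lt_0_compat; lra).
set (T := y^21+z^21+w^21).
assert (hT : 3*m^7 <= T).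
{ unfold T, m. replace (y^21) with ((y^7)^3) by ring. replace (z^21) with ((z^7)^3) by ring.
  replace (w^21) with ((w^7)^3) by ring. replace ((y*z*w)^7) with (y^7*z^7*w^7) by ring.
  apply amgm3; apply pow_le; lra. }
assert (hq := p1 (x^3/m) ltac:(apply Rlt_le, Rdiv_lt_0_compat; [apply pow_lt|]; lra)).
assert (hm21 : 0 < m^21) by (apply pow_lt; lra).
assert (H2 : 63 * x^15 * m^16 <= 9*x^42*m^7 + 27*x^21*m^14 + 27*m^21).
{ assert (E1 : 63 * (x^3/m)^5 * m^21 = 63 * x^15 * m^16) by (field; lra).
  assert (E2 : (9*(x^3/m)^14+27*(x^3/m)^7+27) * m^21 = 9*x^42*m^7 + 27*x^21*m^14 + 27*m^21) by (field; lra).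
  rewrite <- E1, <- E2. apply Rmult_le_compat_r; lra. }
assert (E3 : y^16*z^16*w^16 = m^16) by (unfold m; ring). rewrite E3.
replace (x^21+y^21+z^21+w^21) with (x^21+T) by (unfold T; ring).
assert (hm7 : 0 < m^7) by (apply pow_lt; lra).
assert (hx21 : 0 < x^21) by (apply pow_lt; lra).
assert (hx42 : x^42 = x^21*x^21) by ring.
assert (hx63 : x^63 = x^21*x^21*x^21) by ring.
assert (A1 : 9*x^42*m^7 <= 3*x^42*T).
{ replace (9*x^42*m^7) with ((3*x^42)*(3*m^7)) by ring. apply Rmult_le_compat_l; [|lra].
  assert (0 < x^42) by (apply pow_lt; lra). lra. }
assert (A2 : 27*x^21*m^14 <= 3*x^21*T^2).
{ assert (9*(m^7)^2 <= T^2). { replace (9*(m^7)^2) with ((3*m^7)^2) by ring. apply pow_incr; lra. }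
  replace (m^14) with ((m^7)^2) by ring.
  replace (27*x^21*(m^7)^2) with ((3*x^21)*(9*(m^7)^2)) by ring.
  replace (3*x^21*T^2) with ((3*x^21)*T^2) by ring. apply Rmult_le_compat_l; lra. }
assert (A3 : 27*m^21 <= T^3).
{ replace (m^21) with ((m^7)^3) by ring.
  assert (0 <= 3*m^7) by lra.
  replace (27*(m^7)^3) with ((3*m^7)^3) by ring. apply pow_incr; lra. }
assert (E4 : (x^21+T)^3 = x^63 + 3*x^42*T + 3*x^21*T^2 + T^3) by ring.
lra. Qed.

Lemma cube_root K : 0 < K -> Rpower (K^3) (1/3) = K.
Proof. intros. rewrite <- Rpower_pow by lra. rewrite Rpower_mult.
replace (INR 3 * (1/3)) with 1 by (simpl; field). apply Rpower_1; lra. Qed.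

Lemma term x y z w : 0 < x -> 0 < y -> 0 < z -> 0 < w ->
  x^21 / (x^21+y^21+z^21+w^21) <=
  x^16 / Rpower ((x^16)^3 + 63*y^16*z^16*w^16) (1/3).
Proof. intros hx hy hz hw.
set (S := x^21+y^21+z^21+w^21).
assert (hS : 0 < S) by (unfold S; assert (0<x^21) by (apply pow_lt;lra);
  assert (0<y^21) by (apply pow_lt;lra); assert (0<z^21) by (apply pow_lt;lra);
  assert (0<w^21) by (apply pow_lt;lra); lra).
assert (hx5 : 0 < x^5) by (apply pow_lt; lra).
assert (hx15 : 0 < x^15) by (apply pow_lt; lra).
set (K := S / x^5). assert (hK : 0 < K) by (unfold K; apply Rdiv_lt_0_compat; lra).
set (V := (x^16)^3 + 63*y^16*z^16*w^16).
assert (hV : 0 < V).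
{ unfold V. assert (0 < (x^16)^3) by (apply pow_lt, pow_lt; lra).
  assert (0 < y^16*z^16*w^16) by (repeat apply Rmult_lt_0_compat; try apply pow_lt; lra). lra. }
assert (hVK : V <= K^3).
{ assert (Hk := key x y z w hx hy hz hw). fold S in Hk.
  assert (E : K^3 = S^3 / x^15) by (unfold K; field; lra).
  rewrite E. apply Rmult_le_reg_r with (x^15); [lra|].
  replace (S^3/x^15*x^15) with (S^3) by (field; lra).
  unfold V. replace (((x ^ 16) ^ 3 + 63 * y ^ 16 * z ^ 16 * w ^ 16) * x ^ 15)
   with (x^63 + 63*x^15*(y^16*z^16*w^16)) by ring. exact Hk. }
assert (hR : Rpower V (1/3) <= K).
{ rewrite <- (cube_root K hK). apply Rle_Rpower_l; lra. }
assert (hR0 : 0 < Rpower V (1/3)) by (unfold Rpower; apply exp_pos).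
assert (E : x^21/S = x^16 / K) by (unfold K; field; lra).
rewrite E. unfold Rdiv. apply Rmult_le_compat_l; [apply pow_le; lra|].
apply Rinv_le_contravar; lra. Qed.

Lemma root16 a : 0 < a -> 0 < Rpower a (1/16) /\ (Rpower a (1/16))^16 = a.
Proof. intros. split. unfold Rpower; apply exp_pos.
rewrite <- Rpower_pow by (unfold Rpower; apply exp_pos). rewrite Rpower_mult.
replace (1/16 * INR 16) with 1 by (simpl; field). apply Rpower_1; lra. Qed.

Theorem mainTheorem19 (a b c d : R) (ha : 0 < a) (hb : 0 < b) (hc : 0 < c) (hd : 0 < d) :
  a / Rpower (a ^ 3 + 63 * b * c * d) (1 / 3)
  + b / Rpower (63 * a * c * d + b ^ 3) (1 / 3)
  + c / Rpower (63 * a * b * d + c ^ 3) (1 / 3)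
  + d / Rpower (63 * a * b * c + d ^ 3) (1 / 3) >= 1.
Proof.
destruct (root16 a ha) as [hx ex]. destruct (root16 b hb) as [hy ey].
destruct (root16 c hc) as [hz ez]. destruct (root16 d hd) as [hw ew].
set (x := Rpower a (1/16)) in *. set (y := Rpower b (1/16)) in *.
set (z := Rpower c (1/16)) in *. set (w := Rpower d (1/16)) in *.
clearbody x y z w. subst a b c d.
assert (t1 := term x y z w hx hy hz hw).
assert (t2 := term y x z w hy hx hz hw).
assert (t3 := term z x y w hz hx hy hw).
assert (t4 := term w x y z hw hx hy hz).
replace (63 * x^16 * z^16 * w^16 + (y^16)^3) with ((y^16)^3 + 63*x^16*z^16*w^16) by ring.
replace (63 * x^16 * y^16 * w^16 + (z^16)^3) with ((z^16)^3 + 63*x^16*y^16*w^16) by ring.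
replace (63 * x^16 * y^16 * z^16 + (w^16)^3) with ((w^16)^3 + 63*x^16*y^16*z^16) by ring.
set (S := x^21+y^21+z^21+w^21) in *.
assert (hS : 0 < S) by (unfold S; assert (0<x^21) by (apply pow_lt;lra);
  assert (0<y^21) by (apply pow_lt;lra); assert (0<z^21) by (apply pow_lt;lra);
  assert (0<w^21) by (apply pow_lt;lra); lra).
replace (y^21+x^21+z^21+w^21) with S in t2 by (unfold S; ring).
replace (z^21+x^21+y^21+w^21) with S in t3 by (unfold S; ring).
replace (w^21+x^21+y^21+z^21) with S in t4 by (unfold S; ring).
assert (HSd : S = x^21+y^21+z^21+w^21) by reflexivity. clearbody S. assert (E : x^21/S + y^21/S + z^21/S + w^21/S = 1). { replace 1 with (S/S) by (field; lra). rewrite HSd at 5. field; lra. }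
lra. Qed.
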